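(* Let $\mathcal X$ be finite, $\hat P_0,\hat P_1$ distributions on $\mathcal X$ with full support, and for $\hat\gamma$ with $-D(\hat P_0\|\hat P_1)\le\hat\gamma\le D(\hat P_1\|\hat P_0)$ let $\hat Q_\lambda(x)=\hat P_0^{1-\lambda}(x)\hat P_1^{\lambda}(x)/\sum_a\hat P_0^{1-\lambda}(a)\hat P_1^{\lambda}(a)$ with $\lambda\in[0,1]$ solving $D(\hat Q_\lambda\|\hat P_0)-D(\hat Q_\lambda\|\hat P_1)=\hat\gamma$. Define, for $i\in\{0,1\}$ and a constant $\alpha>0$, $$\theta_i(\hat P_0,\hat P_1,\hat\gamma)=\frac2\alpha\mathrm{Var}_{\hat P_i}\Big(\frac{\hat Q_\lambda(X)}{\hat P_i(X)}\Big).$$ Then for every such $\hat\gamma$, $$\frac{\partial}{\partial\hat\gamma}\theta_0(\hat P_0,\hat P_1,\hat\gamma)\ge0,\qquad \frac{\partial}{\partial\hat\gamma}\theta_1(\hat P_0,\hat P_1,\hat\gamma)\le0.$$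
   Context: $D$ denotes relative entropy. $\theta_i$ is the sensitivity of the worst-case error exponent of the mismatched likelihood ratio test (with test distributions $\hat P_0,\hat P_1$ and threshold $\hat\gamma$) to a divergence-ball mismatch of order/curvature $\alpha$. *)

(* Defs.v *)
From mathcomp Require Import all_boot all_order all_algebra.
From mathcomp Require Import all_classical all_reals all_analysis.
Import Order.TTheory GRing.Theory Num.Theory numFieldNormedType.Exports.
Local Open Scope ring_scope.
Local Open Scope classical_set_scope.

Section Defs.
Context {R : realType} {T : finType}.

Definition is_fulldist (P : T -> R) : Prop :=
  (forall x, 0 < P x) /\ \sum_(x : T) P x = 1.

Definition KL (P Q : T -> R) : R := \sum_(x : T) P x * ln (P x / Q x).

Definition tilted (P0 P1 : T -> R) (l : R) : T -> R :=
  fun x => P0 x `^ (1 - l) * P1 x `^ l /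
           \sum_(a : T) P0 a `^ (1 - l) * P1 a `^ l.

Definition lambda_of (P0 P1 : T -> R) (g : R) : R :=
  xget 0 [set l : R | 0 <= l <= 1 /\
                      KL (tilted P0 P1 l) P0 - KL (tilted P0 P1 l) P1 = g].

Definition variance (P f : T -> R) : R :=
  \sum_(x : T) P x * (f x - \sum_(y : T) P y * f y) ^+ 2.

(* theta_i(P0,P1,g); i = false is index 0, i = true is index 1 *)
Definition theta (alpha : R) (P0 P1 : T -> R) (i : bool) (g : R) : R :=
  let Q := tilted P0 P1 (lambda_of P0 P1 g) in
  let Pi := if i then P1 else P0 in
  2 / alpha * variance Pi (fun x => Q x / Pi x).

End Defs.

(* d is the derivative of f at x, taken within the set A
   (one-sided at the endpoints of an interval A) *)
Definition deriv_within {R : realType} (f : R -> R) (A : set R) (x d : R) : Prop :=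
  (fun h : R => h^-1 * (f (x + h) - f x)) @ within (fun h : R => A (x + h)) ((0 : R)^')
  --> d.

(* Main.v *)
Require Import Defs.
From mathcomp Require Import all_boot all_order all_algebra.
From mathcomp Require Import all_classical all_reals all_analysis.
From mathcomp Require Import ring lra.
Import Order.TTheory GRing.Theory Num.Theory numFieldNormedType.Exports.
Local Open Scope ring_scope.
Local Open Scope classical_set_scope.

Lemma key (R : realType) (Th ga lf : R -> R) (A : set R) (g dT dg : R) :
  is_derive (lf g) 1 Th dT -> is_derive (lf g) 1 ga dg -> dg != 0 ->
  {homo ga : x y / x < y} ->
  (forall y, A y -> ga (lf y) = y) -> A g ->
  deriv_within (Th \o lf) A g (dT / dg).
Proof.
move=> [dTx dTv] [dgx dgv] dg0 gaI gaK Ag.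
set l0 := lf g.
have HT : (fun k => k^-1 *: ((Th \o shift l0) (k *: 1) - Th l0)) @ 0^' --> dT.
  by rewrite -dTv.
have HG : (fun k => k^-1 *: ((ga \o shift l0) (k *: 1) - ga l0)) @ 0^' --> dg.
  by rewrite -dgv.
have gaM : {mono ga : x y / x <= y} by apply: le_mono.
rewrite /deriv_within.
set F := within _ _.
have FF : Filter F by apply: within_filter.
pose k h := lf (g + h) - l0.
have FA' : forall P : set R, (\forall h \near nbhs (0:R), h != 0 -> A (g + h) -> P h) -> F P.
  move=> P HP; rewrite /F /within /=.
  rewrite /dnbhs /within /=.
  change (nbhs (0:R) (fun h => h != 0 -> A (g+h) -> P h)).
  exact: HP.
have FA : forall P : set R, (forall h, h != 0 -> A (g + h) -> P h) -> F P.
  by move=> P HP; apply: FA'; apply: filterE.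
have k0 : k @ F --> (0:R).
  apply/cvgrPdist_lt => e e0.
  have gaL : {mono ga : x y / x < y} by apply: leW_mono.
  have gl : ga l0 = g by exact: gaK.
  have e1 : g < ga (l0 + e) by rewrite -{1}gl gaL ltrDl.
  have e2 : ga (l0 - e) < g by rewrite -gl gaL ltrBlDr ltrDl.
  have dp : 0 < Num.min (ga (l0 + e) - g) (g - ga (l0 - e)).
    by rewrite lt_min !subr_gt0 e1 e2.
  apply: FA'; apply: filterS (nbhs0_lt dp) => h hd h0 Ah.
  rewrite lt_min in hd; case/andP: hd; rewrite !ltr_norml => /andP[a1 a2] /andP[b1 b2].
  have m1 : lf (g + h) < l0 + e by rewrite -gaL gaK //; lra.
  have m2 : l0 - e < lf (g + h) by rewrite -gaL gaK //; lra.
  rewrite /k; apply/andP; split; lra.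
have knz : forall h, h != 0 -> A (g + h) -> k h != 0.
  move=> h h0 Ah.
  apply: contra h0; rewrite /k subr_eq0 => /eqP e.
  have := gaK _ Ah; rewrite e /l0 gaK // => /eqP.
  by rewrite eq_sym -subr_eq0 addrAC subrr add0r.
have kF : k @ F --> (0:R)^'.
  move=> P /= HP.
  have HP' : nbhs (0:R) (fun y => y != 0 -> P y) by exact: HP.
  have := k0 _ HP'.
  have := FA _ knz.
  move=> H1 H2; apply: (filterS2 _ _ H1 H2) => h h1 h2; exact: h2 h1.
have := cvgM (cvg_comp k _ kF HT) (cvgV dg0 (cvg_comp k _ kF HG)).
move=> /(_ FF FF) H; apply: (cvg_trans _ H); apply: near_eq_cvg.

apply: FA => h h0 Ah /=.
have kh0 := knz h h0 Ah.
have E1 : k h + l0 = lf (g + h) by rewrite /k subrK.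
rewrite (_ : (k h)%:A = k h); last by rewrite /GRing.scale /= mulr1.
rewrite E1 gaK // /l0 gaK //.
rewrite -/l0 /GRing.scale /=.

rewrite addrAC subrr add0r; field; exact/andP.
Qed.

Lemma deriv_trivial (R : realType) (f : R -> R) (A : set R) (g d : R) :
  (forall h, A (g + h) -> h = 0) -> deriv_within f A g d.
Proof.
move=> HA; rewrite /deriv_within => P _ /=.
rewrite /within /= /dnbhs /within /=.
change (nbhs (0:R) (fun h => h != 0 -> A (g+h) -> P (h^-1 * (f (g + h) - f g)))).
by apply: filterE => h h0 /HA h00; move: h0; rewrite h00 eqxx.
Qed.

Section S.
Context {R : realType} {T : finType} (P0 P1 : T -> R).
Hypothesis (P0pos : forall x, 0 < P0 x) (P1pos : forall x, 0 < P1 x).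
Hypothesis (P0sum : \sum_x P0 x = 1) (P1sum : \sum_x P1 x = 1).

Definition LL x := ln (P1 x) - ln (P0 x).
Definition ww x t := expR (ln (P0 x) + t * LL x).
Definition Zf t := \sum_x ww x t.
Definition Z1 t := \sum_x LL x * ww x t.
Definition Z2 t := \sum_x LL x ^+ 2 * ww x t.
Definition gam t := Z1 t / Zf t.

Lemma ww_gt0 x t : 0 < ww x t.
Proof. exact: expR_gt0. Qed.

Lemma ww0 x : ww x 0 = P0 x.
Proof. by rewrite /ww mul0r addr0 lnK // posrE. Qed.

Lemma ww1 x : ww x 1 = P1 x.
Proof. by rewrite /ww mul1r /LL addrC subrK lnK // posrE. Qed.

Lemma Zf0 : Zf 0 = 1.
Proof. by rewrite /Zf -P0sum; apply: eq_bigr => x _; rewrite ww0. Qed.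

Lemma Zf1 : Zf 1 = 1.
Proof. by rewrite /Zf -[RHS]P1sum; apply: eq_bigr => x _; rewrite ww1. Qed.

Lemma Zf_gt0 t : 0 < Zf t.
Proof.
case: (pickP (@predT T)) => [x0 _|H].
  rewrite /Zf (bigD1 x0) //=; apply: ltr_wpDr; last exact: ww_gt0.
  by apply: sumr_ge0 => x _; apply: ltW; exact: ww_gt0.
by move: P0sum; rewrite big_pred0 // => /esym/eqP; rewrite oner_eq0.
Qed.

Lemma powR_ww x t : P0 x `^ (1 - t) * P1 x `^ t = ww x t.
Proof.
rewrite /powR !gt_eqF // -expRD /ww /LL; congr expR; ring.
Qed.

Lemma tiltedE t : tilted P0 P1 t = fun x => ww x t / Zf t.
Proof.
apply/funext => x; rewrite /tilted powR_ww /Zf; congr (_ / _).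
by apply: eq_bigr => y _; rewrite powR_ww.
Qed.

Lemma KLdiff t : KL (tilted P0 P1 t) P0 - KL (tilted P0 P1 t) P1 = gam t.
Proof.
rewrite /KL tiltedE -sumrB /gam /Z1 mulr_suml; apply: eq_bigr => x _.
have Zp := Zf_gt0 t; have wp := ww_gt0 x t.
have qp : 0 < ww x t / Zf t by apply: divr_gt0.
rewrite !ln_div ?posrE // /LL; ring.
Qed.

Lemma var_id (Pc : T -> R) c t : (forall x, Pc x = ww x c) -> Zf c = 1 ->
  Defs.variance Pc (fun x => (ww x t / Zf t) / Pc x) = Zf (2 * t - c) / Zf t ^+ 2 - 1.
Proof.
move=> PcE Zc; have Zp := Zf_gt0 t.
have m1 : \sum_y Pc y * (ww y t / Zf t / Pc y) = 1.
  rewrite -(@divff _ (Zf t)) ?gt_eqF // /Zf mulr_suml; apply: eq_bigr => y _.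
  rewrite PcE; have := ww_gt0 y c; have := ww_gt0 y t => a b.
  by field; rewrite !gt_eqF.
rewrite /Defs.variance m1.
transitivity (\sum_x ((Zf t ^+ 2)^-1 * ww x (2 * t - c) - (2 / Zf t) * ww x t + ww x c)).
  apply: eq_bigr => x _; rewrite PcE.
  have e : ww x (2 * t - c) = ww x t ^+ 2 / ww x c.
    by rewrite /ww -expRM_natr -expRN -expRD; congr expR; ring.
  rewrite e; have := ww_gt0 x c; have := ww_gt0 x t => a b.
  by field; rewrite !gt_eqF.
rewrite big_split sumrB /= -!mulr_sumr -/(Zf _) -/(Zf _) -/(Zf _) Zc.
by field; rewrite gt_eqF.
Qed.


Lemma is_derive_sumseq (I : Type) (r : seq I) (f : I -> R -> R) (df : I -> R) (t : R) :
  (forall i, is_derive t 1 (f i) (df i)) ->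
  is_derive t 1 (fun s => \sum_(i <- r) f i s) (\sum_(i <- r) df i).
Proof.
move=> H; elim: r => [|i r IH].
  rewrite big_nil; have -> : (fun s : R => \sum_(i <- [::]) f i s) = cst 0.
    by apply/funext => s; rewrite big_nil.
  exact: is_derive_cst.
rewrite big_cons; have -> : (fun s => \sum_(j <- i :: r) f j s) =
   (f i + (fun s => \sum_(j <- r) f j s)).
  by apply/funext => s; rewrite big_cons.
exact: is_deriveD.
Qed.

Lemma dM (f h : R -> R) (a b t : R) : is_derive t 1 f a -> is_derive t 1 h b ->
  is_derive t 1 (fun s => f s * h s) (f t * b + h t * a).
Proof. move=> Hf Hh; exact: is_deriveM. Qed.

Lemma dD (f h : R -> R) (a b t : R) : is_derive t 1 f a -> is_derive t 1 h b ->
  is_derive t 1 (fun s => f s + h s) (a + b).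
Proof. move=> Hf Hh; exact: is_deriveD. Qed.

Lemma dV (f : R -> R) (a t : R) : f t != 0 -> is_derive t 1 f a ->
  is_derive t 1 (fun s => (f s)^-1) (- (f t ^+ 2)^-1 * a).
Proof. move=> H Hf; exact: is_deriveV. Qed.

Lemma dC (c t : R) : is_derive t 1 (fun _ => c) 0.
Proof. exact: is_derive_cst. Qed.

Lemma dI (t : R) : is_derive t 1 (fun s => s) 1.
Proof. exact: is_derive_id. Qed.

Lemma dcomp (f h : R -> R) (a b t : R) : is_derive (h t) 1 f a -> is_derive t 1 h b ->
  is_derive t 1 (fun s => f (h s)) (a * b).
Proof. move=> Hf Hh; exact: is_derive1_comp. Qed.

Lemma dE (f : R -> R) (a b t : R) : is_derive t 1 f a -> a = b -> is_derive t 1 f b.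
Proof. by move=> H <-. Qed.

Lemma dlin (a b t : R) : is_derive t 1 (fun s => a * s - b) a.
Proof.
eapply dE; first eapply (@dD (fun s => a * s) (fun _ => - b)).
- eapply (@dM (fun _ => a) (fun s => s)); [exact: dC | exact: dI].
- exact: dC.
by rewrite mulr1 mulr0 !addr0.
Qed.

Lemma dww (x : T) (t : R) : is_derive t 1 (ww x) (LL x * ww x t).
Proof.
change (is_derive t 1 (fun s => expR (ln (P0 x) + s * LL x)) (LL x * ww x t)).
apply: dE.
by rewrite scaler0 add0r mul1r -[(LL x)%:A]/(LL x * 1) mulr1 mulrC add0r.
Qed.


Lemma dZf (t : R) : is_derive t 1 Zf (Z1 t).
Proof.
exact: (@is_derive_sumseq _ _ (fun x s => ww x s) (fun x => LL x * ww x t) t (fun x => dww x t)).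
Qed.

Lemma dZ1 (t : R) : is_derive t 1 Z1 (Z2 t).
Proof.
apply: (@is_derive_sumseq _ _ (fun x s => LL x * ww x s) (fun x => LL x ^+ 2 * ww x t) t) => x.
eapply dE. eapply (@dM (fun _ => LL x) (ww x)). exact: dC. exact: dww.
by rewrite mulr0 addr0 mulrA expr2.
Qed.

Lemma dgam (t : R) : is_derive t 1 gam ((Z2 t * Zf t - Z1 t ^+ 2) / Zf t ^+ 2).
Proof.
have Zp := Zf_gt0 t.
eapply dE. eapply (@dM Z1 (fun s => (Zf s)^-1)). exact: dZ1. apply: dV; [by rewrite gt_eqF | exact: dZf].
by field; rewrite gt_eqF.
Qed.


Lemma num_id t : Z2 t * Zf t - Z1 t ^+ 2 =
  (\sum_x ww x t * (LL x * Zf t - Z1 t) ^+ 2) / Zf t.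
Proof.
have Zp := Zf_gt0 t.
transitivity ((\sum_x (Zf t ^+ 2 * (LL x ^+ 2 * ww x t) - (2 * Zf t * Z1 t) * (LL x * ww x t)
   + Z1 t ^+ 2 * ww x t)) / Zf t); last first.
  by congr (_ / _); apply: eq_bigr => x _; ring.
rewrite big_split sumrB /= -!mulr_sumr -/(Z2 _) -/(Z1 _) -/(Zf _).
by field; rewrite gt_eqF.
Qed.

Lemma dgam_ge0 t : 0 <= (Z2 t * Zf t - Z1 t ^+ 2) / Zf t ^+ 2.
Proof.
have Zp := Zf_gt0 t.
rewrite num_id; apply: divr_ge0; last exact: exprn_ge0 (ltW Zp).
apply: divr_ge0; last exact: ltW.
apply: sumr_ge0 => x _; apply: mulr_ge0; first exact: ltW (ww_gt0 x t).
exact: sqr_ge0.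
Qed.

Lemma gam_cont : continuous gam.
Proof.
move=> t; apply/differentiable_continuous; rewrite -derivable1_diffP.
by case: (dgam t).
Qed.

Lemma derive1_gam t : gam^`() t = (Z2 t * Zf t - Z1 t ^+ 2) / Zf t ^+ 2.
Proof. by rewrite derive1E; case: (dgam t). Qed.

Lemma gam_ndecr x y : x <= y -> gam x <= gam y.
Proof.
move=> xy; apply: (@ger0_derive1_ndecr _ gam x y) => //.
- by move=> z _; case: (dgam z).
- by move=> z _; rewrite derive1_gam; exact: dgam_ge0.
- by apply: continuous_subspaceT => z; exact: gam_cont.
Qed.

Lemma dgam_gt0 t : (exists x0, P0 x0 != P1 x0) ->
  0 < (Z2 t * Zf t - Z1 t ^+ 2) / Zf t ^+ 2.
Proof.
move=> [x0 Hx0]; have Zp := Zf_gt0 t.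
rewrite num_id; apply: divr_gt0; last exact: exprn_gt0.
apply: divr_gt0 => //.
case: (boolP [forall x, LL x * Zf t == Z1 t]) => [/forallP H|].
  exfalso; move: Hx0; apply/negP; rewrite negbK.
  pose c := Z1 t / Zf t.
  have E : forall x, P1 x = P0 x * expR c.
    move=> x; have := H x; move/eqP => Hx.
    have Lc : LL x = c by rewrite /c -Hx mulfK // gt_eqF.
    rewrite -[P1 x]lnK ?posrE // -[P0 x]lnK ?posrE // -expRD; congr expR.
    by rewrite -Lc /LL; ring.
  have ec : expR c = 1.
    by rewrite -P1sum (eq_bigr _ (fun x _ => E x)) -mulr_suml P0sum mul1r.
  by rewrite E ec mulr1.
rewrite negb_forall => /existsP [x1 Hx1].
rewrite (bigD1 x1) //=; apply: ltr_wpDr.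
  apply: sumr_ge0 => x _; apply: mulr_ge0; first exact: ltW (ww_gt0 x t).
  exact: sqr_ge0.
apply: mulr_gt0; first exact: ww_gt0.
by rewrite lt_def sqrf_eq0 subr_eq0 Hx1 sqr_ge0.
Qed.


Lemma gam_incr : (exists x0, P0 x0 != P1 x0) -> {homo gam : x y / x < y}.
Proof.
move=> H x y xy; apply: (@gtr0_derive1_lt_cc _ gam x y) => //.
- by move=> z _; case: (dgam z).
- by move=> z _; rewrite derive1_gam; exact: dgam_gt0.
- by apply: continuous_subspaceT => z; exact: gam_cont.
- by rewrite in_itv /= lexx ltW.
- by rewrite in_itv /= lexx ltW.
Qed.

Definition Th (K c t : R) := K * (Zf (2 * t - c) * (Zf t * Zf t)^-1 - 1).

Lemma dTh (K c t : R) : is_derive t 1 (Th K c)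
  (2 * K * (Zf (2 * t - c) / (Zf t * Zf t)) * (gam (2 * t - c) - gam t)).
Proof.
have Zp := Zf_gt0 t; have Zp2 := Zf_gt0 (2 * t - c).
have dA : is_derive t 1 (fun s => Zf (2 * s - c)) (Z1 (2 * t - c) * 2).
  eapply (@dcomp Zf (fun s => 2 * s - c)); first exact: dZf.
  exact: dlin.
have dB : is_derive t 1 (fun s => (Zf s * Zf s)^-1)
    (- ((Zf t * Zf t) ^+ 2)^-1 * (Zf t * Z1 t + Zf t * Z1 t)).
  apply: dV; first by rewrite mulf_neq0 // gt_eqF.
  by apply: dM; exact: dZf.
rewrite /Th; eapply dE.
  eapply (@dM (fun _ => K)); first exact: dC.
  eapply (@dD (fun s => Zf (2 * s - c) * (Zf s * Zf s)^-1)); last exact: dC.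
  exact: dM dA dB.
rewrite /gam; field; rewrite !gt_eqF //.
Qed.


Lemma dTh0_ge0 K t : 0 < K -> 0 <= t ->
  0 <= 2 * K * (Zf (2 * t - 0) / (Zf t * Zf t)) * (gam (2 * t - 0) - gam t).
Proof.
move=> Kp tp; have Zp := Zf_gt0 t; have Zp2 := Zf_gt0 (2 * t - 0).
apply: mulr_ge0; last by rewrite subr_ge0; apply: gam_ndecr; lra.
apply: mulr_ge0; first lra.
by apply: divr_ge0; [exact: ltW | apply: mulr_ge0; exact: ltW].
Qed.

Lemma dTh1_le0 K t : 0 < K -> t <= 1 ->
  2 * K * (Zf (2 * t - 1) / (Zf t * Zf t)) * (gam (2 * t - 1) - gam t) <= 0.
Proof.
move=> Kp tp; have Zp := Zf_gt0 t; have Zp2 := Zf_gt0 (2 * t - 1).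
apply: mulr_ge0_le0; last by rewrite subr_le0; apply: gam_ndecr; lra.
apply: mulr_ge0; first lra.
by apply: divr_ge0; [exact: ltW | apply: mulr_ge0; exact: ltW].
Qed.

Lemma KLself (P : T -> R) : (forall x, 0 < P x) -> KL P P = 0.
Proof.
move=> Pp; rewrite /KL big1 // => x _.
by rewrite divff ?gt_eqF // ln1 mulr0.
Qed.

Lemma gam0 : gam 0 = - KL P0 P1.
Proof.
rewrite -KLdiff (_ : tilted P0 P1 0 = P0) ?KLself ?sub0r //.
by rewrite tiltedE Zf0; apply/funext => x; rewrite ww0 divr1.
Qed.

Lemma gam1 : gam 1 = KL P1 P0.
Proof.
rewrite -KLdiff (_ : tilted P0 P1 1 = P1) ?KLself ?subr0 //.
by rewrite tiltedE Zf1; apply/funext => x; rewrite ww1 divr1.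
Qed.

Lemma theta_eq alpha (b : bool) y :
  theta alpha P0 P1 b y = Th (2 / alpha) b%:R (lambda_of P0 P1 y).
Proof.
rewrite /theta tiltedE /Th -expr2; congr (_ * _).
case: b => /=.
  by rewrite (@var_id P1 1) ?Zf1 // => x; rewrite ww1.
by rewrite (@var_id P0 0) ?Zf0 // => x; rewrite ww0.
Qed.


Lemma main_sec alpha g : 0 < alpha -> - KL P0 P1 <= g <= KL P1 P0 ->
  (exists d, deriv_within (theta alpha P0 P1 false)
               [set y | - KL P0 P1 <= y <= KL P1 P0] g d /\ 0 <= d) /\
  (exists d, deriv_within (theta alpha P0 P1 true)
               [set y | - KL P0 P1 <= y <= KL P1 P0] g d /\ d <= 0).
Proof.
move=> ha hg.
set A := [set y | - KL P0 P1 <= y <= KL P1 P0].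
have Ag : A g by [].
case: (boolP [exists x, P0 x != P1 x]) => [/existsP Hne | Hall]; last first.
  have E : P1 = P0.
    apply/funext => x; move: Hall; rewrite negb_exists => /forallP/(_ x).
    by rewrite negbK => /eqP.
  have HA : forall h, A (g + h) -> h = 0.
    move=> h; rewrite /A /= E KLself // oppr0.
    move: hg; rewrite E KLself // oppr0 => /andP[g1 g2] /andP[h1 h2]; lra.
  by split; exists 0; split => //; apply: deriv_trivial.
have sol : forall y, A y -> (0 <= lambda_of P0 P1 y <= 1) /\ gam (lambda_of P0 P1 y) = y.
  move=> y Ay.
  have : exists l, 0 <= l <= 1 /\ KL (tilted P0 P1 l) P0 - KL (tilted P0 P1 l) P1 = y.
    have g01 : gam 0 <= gam 1 by apply: gam_ndecr; exact: ler01.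
    have cg : {within `[0, 1], continuous gam}.
      by apply: continuous_subspaceT => z; exact: gam_cont.
    have hb : Num.min (gam 0) (gam 1) <= y <= Num.max (gam 0) (gam 1).
      by rewrite (min_idPl g01) (max_idPr g01) gam0 gam1.
    have [c cin gc] := @IVT R gam 0 1 y ler01 cg hb.
    exists c; rewrite in_itv /= in cin; split => //; by rewrite KLdiff.
  move/(xgetPex 0) => [H1 H2]; split => //; rewrite -KLdiff; exact H2.
have [/andP [l0 l1] _] := sol g Ag.
set lg := lambda_of P0 P1 g.
have dg0 := dgam_gt0 lg Hne.
have gK : forall y, A y -> gam (lambda_of P0 P1 y) = y by move=> y /sol [].
split.
  exists ((2 * (2 / alpha) * (Zf (2 * lg - 0) / (Zf lg * Zf lg)) * (gam (2 * lg - 0) - gam lg)) /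
          ((Z2 lg * Zf lg - Z1 lg ^+ 2) / Zf lg ^+ 2)); split.
    rewrite (_ : theta alpha P0 P1 false = Th (2 / alpha) 0 \o lambda_of P0 P1); last first.
      by apply/funext => y; rewrite theta_eq.
    apply: key => //; [exact: dTh | exact: dgam | by rewrite gt_eqF | exact: gam_incr | exact: gK].
  apply: divr_ge0; last exact: ltW.
  by apply: dTh0_ge0 => //; apply: divr_gt0.
exists ((2 * (2 / alpha) * (Zf (2 * lg - 1) / (Zf lg * Zf lg)) * (gam (2 * lg - 1) - gam lg)) /
        ((Z2 lg * Zf lg - Z1 lg ^+ 2) / Zf lg ^+ 2)); split.
  rewrite (_ : theta alpha P0 P1 true = Th (2 / alpha) 1 \o lambda_of P0 P1); last first.
    by apply/funext => y; rewrite theta_eq.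
  apply: key => //; [exact: dTh | exact: dgam | by rewrite gt_eqF | exact: gam_incr | exact: gK].
apply: mulr_le0_ge0.
  by apply: dTh1_le0 => //; apply: divr_gt0.
by rewrite invr_ge0; exact: ltW.
Qed.

End S.

Theorem proposition1 (R : realType) (T : finType) (alpha : R)
    (P0 P1 : T -> R) (g : R) :
  0 < alpha -> is_fulldist P0 -> is_fulldist P1 ->
  - KL P0 P1 <= g <= KL P1 P0 ->
  (exists d, deriv_within (theta alpha P0 P1 false)
               [set y | - KL P0 P1 <= y <= KL P1 P0] g d /\ 0 <= d) /\
  (exists d, deriv_within (theta alpha P0 P1 true)
               [set y | - KL P0 P1 <= y <= KL P1 P0] g d /\ d <= 0).
Proof.
move=> ha [p0 s0] [p1 s1] hg.
exact: main_sec.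
Qed.
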